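(* For a thermodynamic Stephani universe with $b''(R)=0$, one has $A_1=0$; if moreover $A_2=c_2$ is constant, then $\chi(\pi)=\lambda\pi+\lambda-\frac23$ with $\lambda=1+c_2/3$. If $\lambda\in(\lambda_\eta,5/6)$, $\lambda_\eta=(13-2\sqrt{30})/3$, then for all $\pi\in(0,1)$: $0<\chi(\pi)<1$, $\zeta(\pi)>0$ and $\eta(\pi)>0$. In particular, if $b''=0$ and $9+16A_1+12A_2=0$, then $A_2=-3/4$, $\lambda=3/4$, $\chi(\pi)=(9\pi+1)/12$, and these inequalities hold on all of $(0,1)$.
   Context: Thermodynamic Stephani universe: $ds^2=-\alpha^2dt^2+\Omega^2(dx^2+dy^2+dz^2)$, $L=R(t)/(1+b(t)w)$, $\Omega=\frac{w}{2z}L$, $\alpha=R\partial_R\ln L$, $w=2z/(1+\frac\varepsilon4r^2)$, $\varepsilon\in\{0,\pm1\}$; functions of $t$ regarded as functions of $R$ (prime $=d/dR$); $\rho=\frac{3}{R^2}(\dot R^2+\varepsilon-4b^2)$, $a(R)=-R\rho'(R)/(3\rho)$, $A_1=-\frac{Rb''}{a^2b'}$, $A_2=\frac{Rb''}{ab'}-\frac{a'R}{a^2}-\frac1a$, and the indicatrix is $\chi=\pi+\frac13+\frac13(\pi+1)[(\pi+1)A_1+A_2]$, $\pi=p/\rho$. $\zeta(\pi)=(1+\pi)(\chi-\pi)\chi'+2\chi(1-\chi)$, $\eta(\pi)=(2\pi+1)\chi-\pi$. *)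

(* Defs.v *)
From Stdlib Require Import Reals Lra.
From Coquelicot Require Import Coquelicot.
Open Scope R_scope.

(* All functions of t are regarded as functions of the scale factor R (> 0).
   Rdot : R -> R is  dR/dt  expressed as a function of R, b : R -> R. *)

Definition rho (eps : R) (Rdot b : R -> R) (x : R) : R :=
  3 / x ^ 2 * (Rdot x ^ 2 + eps - 4 * b x ^ 2).

Definition a_fun (eps : R) (Rdot b : R -> R) (x : R) : R :=
  - x * Derive (rho eps Rdot b) x / (3 * rho eps Rdot b x).

Definition A1f (a b : R -> R) (x : R) : R :=
  - x * Derive (Derive b) x / (a x ^ 2 * Derive b x).

Definition A2f (a b : R -> R) (x : R) : R :=
  x * Derive (Derive b) x / (a x * Derive b x)
  - Derive a x * x / a x ^ 2 - 1 / a x.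

Definition chi (a b : R -> R) (x : R) (p : R) : R :=
  p + 1/3 + 1/3 * (p + 1) * ((p + 1) * A1f a b x + A2f a b x).

Definition zeta (ch : R -> R) (p : R) : R :=
  (1 + p) * (ch p - p) * Derive ch p + 2 * ch p * (1 - ch p).

Definition eta (ch : R -> R) (p : R) : R :=
  (2 * p + 1) * ch p - p.

Definition lambda_eta : R := (13 - 2 * sqrt 30) / 3.

(* Main.v *)
Require Import Defs.
From Stdlib Require Import Reals.
From Coquelicot Require Import Coquelicot.
From Stdlib Require Import Lra Psatz.
Open Scope R_scope.


Lemma ineqs (lam p : R) : lambda_eta < lam < 5/6 -> 0 < p < 1 ->
  let c := lam * p + lam - 2/3 in
  0 < c < 1 /\ (1 + p) * (c - p) * lam + 2 * c * (1 - c) > 0 /\ (2 * p + 1) * c - p > 0.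
Proof.
  intros [H1 H2] Hp c. unfold lambda_eta in H1.
  pose proof (sqrt_sqrt 30 ltac:(lra)) as Hs. pose proof (sqrt_pos 30) as Hs0.
  set (s := sqrt 30) in *.
  assert (Hs1 : s < 11/2) by nra.
  assert (Hl : 2/3 < lam) by lra.
  unfold c. split; [split; nra|]. split.
  - assert (E : (1 + p) * (lam * p + lam - 2 / 3 - p) * lam +
      2 * (lam * p + lam - 2 / 3) * (1 - (lam * p + lam - 2 / 3)) =
      (2 - (p+1)) * ((lam-2/3)*(10/3-lam)) + ((p+1)-1) * ((2*lam-5/3)*(4/3-2*lam))
      + (lam*lam+lam) * (((p+1)-1)*(2-(p+1)))) by field.
    rewrite E.
    assert (0 < (lam-2/3)*(10/3-lam)) by nra.
    assert (0 < (2*lam-5/3)*(4/3-2*lam)) by nra.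
    assert (0 < ((p+1)-1)*(2-(p+1))) by nra.
    assert (0 < lam*lam+lam) by nra.
    nra.
  - assert (HD : (3*lam-7/3)^2 - 8*lam*(lam-2/3) < 0).
    { assert (E : (3*lam-7/3)^2 - 8*lam*(lam-2/3) = (lam - (13-2*s)/3)*(lam-(13+2*s)/3)) by nra.
      rewrite E. nra. }
    assert (E : 8*lam*((2 * p + 1) * (lam * p + lam - 2 / 3) - p) =
      (4*lam*p + (3*lam-7/3))^2 - ((3*lam-7/3)^2 - 8*lam*(lam-2/3))) by field.
    assert (0 < 8*lam*((2 * p + 1) * (lam * p + lam - 2 / 3) - p)).
    { rewrite E. pose proof (pow2_ge_0 (4*lam*p + (3*lam-7/3))). lra. }
    assert (0 < 8*lam) by lra.
    apply Rlt_gt. apply (Rmult_lt_reg_l (8*lam)); lra.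
Qed.

Lemma Derive_lin (lam p : R) : Derive (fun p => lam * p + lam - 2/3) p = lam.
Proof. apply is_derive_unique. auto_derive; auto; field. Qed.

Theorem mainTheorem14
  (eps : R) (Rdot b : R -> R)
  (Heps : eps = 0 \/ eps = 1 \/ eps = -1)
  (* standing regularity / well-definedness assumptions, for R > 0 *)
  (Hrho_ne0 : forall x, 0 < x -> rho eps Rdot b x <> 0)
  (Hrho_d : forall x, 0 < x -> ex_derive (rho eps Rdot b) x)
  (Ha_d : forall x, 0 < x -> ex_derive (a_fun eps Rdot b) x)
  (Ha_ne0 : forall x, 0 < x -> a_fun eps Rdot b x <> 0)
  (Hb_d : forall x, 0 < x -> ex_derive b x)
  (Hb_d2 : forall x, 0 < x -> ex_derive (Derive b) x)
  (Hb'_ne0 : forall x, 0 < x -> Derive b x <> 0)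
  (* b''(R) = 0 *)
  (Hb'' : forall x, 0 < x -> Derive (Derive b) x = 0) :
  let a := a_fun eps Rdot b in
  (forall x, 0 < x -> A1f a b x = 0) /\
  (forall c2 : R, (forall x, 0 < x -> A2f a b x = c2) ->
     let lam := 1 + c2 / 3 in
     (forall x, 0 < x -> forall p, chi a b x p = lam * p + lam - 2/3) /\
     (lambda_eta < lam < 5/6 ->
        forall x, 0 < x -> forall p, 0 < p < 1 ->
          0 < chi a b x p < 1 /\ zeta (chi a b x) p > 0 /\ eta (chi a b x) p > 0)) /\
  ((forall x, 0 < x -> 9 + 16 * A1f a b x + 12 * A2f a b x = 0) ->
     (forall x, 0 < x -> A2f a b x = -3/4) /\
     1 + (-3/4) / 3 = 3/4 /\
     (forall x, 0 < x -> forall p, chi a b x p = (9 * p + 1) / 12) /\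
     (forall x, 0 < x -> forall p, 0 < p < 1 ->
          0 < chi a b x p < 1 /\ zeta (chi a b x) p > 0 /\ eta (chi a b x) p > 0)).
Proof.
  intros a.
  assert (HA1 : forall x, 0 < x -> A1f a b x = 0).
  { intros x Hx. unfold A1f. rewrite Hb''; auto. unfold Rdiv. ring. }
  assert (P2 : forall c2 : R, (forall x, 0 < x -> A2f a b x = c2) ->
     let lam := 1 + c2 / 3 in
     (forall x, 0 < x -> forall p, chi a b x p = lam * p + lam - 2/3) /\
     (lambda_eta < lam < 5/6 ->
        forall x, 0 < x -> forall p, 0 < p < 1 ->
          0 < chi a b x p < 1 /\ zeta (chi a b x) p > 0 /\ eta (chi a b x) p > 0)).
  { intros c2 Hc2 lam.
    assert (Hchi : forall x, 0 < x -> forall p, chi a b x p = lam * p + lam - 2/3).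
    { intros x Hx p. unfold chi. rewrite HA1, Hc2; auto. unfold lam. field. }
    split; auto.
    intros Hl x Hx p Hp.
    assert (Hf : chi a b x = fun p => lam * p + lam - 2/3).
    { apply FunctionalExtensionality.functional_extensionality. intro; apply Hchi; auto. }
    unfold zeta, eta. rewrite Hf, Derive_lin. apply ineqs; auto. }
  split; auto. split; auto.
  intros H9.
  assert (HA2 : forall x, 0 < x -> A2f a b x = -3/4).
  { intros x Hx. specialize (H9 x Hx). rewrite HA1 in H9; auto. lra. }
  destruct (P2 (-3/4) HA2) as [Hc Hi].
  split; auto. split; [field|]. split.
  - intros x Hx p. rewrite Hc; auto. field.
  - apply Hi. unfold lambda_eta.
    pose proof (sqrt_sqrt 30 ltac:(lra)) as Hs. pose proof (sqrt_pos 30).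
    split; nra.
Qed.
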